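(* Let $X,Y,Z$ be countable discrete metric spaces of bounded geometry, $d_{XY}\in D(X,Y)$, $d_{YZ}\in D(Y,Z)$. Then $M_{d_{XY}}(X,Y)\hat\otimes M_{d_{YZ}}(Y,Z)=M_{d_{YZ}\circ d_{XY}}(X,Z)$.
   Context: A discrete metric space $X$ has bounded geometry if for every $R>0$ the cardinalities $|B_R(x)|$ of balls of radius $R$ are finite and bounded uniformly in $x\in X$. $H_X=l^2(X)$ with basis $\{\delta_x\}$; for $T:H_X\to H_Y$ bounded, $T_{yx}=\langle T\delta_x,\delta_y\rangle$; $T$ has propagation less than $L$ w.r.t. $\rho$ if $T_{yx}=0$ whenever $\rho(x,y)\ge L$. $M_\rho(X,Y)$ is the norm closure in $\mathbb B(H_X,H_Y)$ of bounded operators of finite propagation w.r.t. $\rho$. $D(X,Y)$ is the set of metrics on $X\sqcup Y$ restricting to $d_X,d_Y$. $(d_{YZ}\circ d_{XY})$ is the metric on $X\sqcup Z$ equal to $d_X$, $d_Z$ on $X$, $Z$ and $(d_{YZ}\circ d_{XY})(x,z)=\inf_{y\in Y}(d_{XY}(x,y)+d_{YZ}(y,z))$. For closed subspaces $M\subset\mathbb B(H_X,H_Y)$, $N\subset\mathbb B(H_Y,H_Z)$, $M\hat\otimes N$ denotes the norm closure in $\mathbb B(H_X,H_Z)$ of the linear span of all $S\circ T$ with $T\in M$, $S\in N$. *)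

(* Defs.v *)
From Stdlib Require Import Reals List Classical ClassicalEpsilon.
Open Scope R_scope.

Definition C : Type := (R * R)%type.
Definition C0 : C := (0, 0).
Definition C1 : C := (1, 0).
Definition Cadd (a b : C) : C := (fst a + fst b, snd a + snd b).
Definition Copp (a : C) : C := (- fst a, - snd a).
Definition Cmul (a b : C) : C :=
  (fst a * fst b - snd a * snd b, fst a * snd b + snd a * fst b).
Definition Cnorm2 (a : C) : R := fst a * fst a + snd a * snd a.

Definition Rsup (E : R -> Prop) : R := epsilon (inhabits 0) (is_lub E).
Definition is_glb (E : R -> Prop) (m : R) : Prop :=
  (forall r, E r -> m <= r) /\ (forall b, (forall r, E r -> b <= r) -> b <= m).
Definition Rinf (E : R -> Prop) : R := epsilon (inhabits 0) (is_glb E).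

Definition IsMetric {T : Type} (d : T -> T -> R) : Prop :=
  (forall x y, 0 <= d x y) /\
  (forall x y, d x y = 0 <-> x = y) /\
  (forall x y, d x y = d y x) /\
  (forall x y z, d x z <= d x y + d y z).

Definition CountableT (T : Type) : Prop :=
  exists f : T -> nat, forall x y, f x = f y -> x = y.

Definition DiscreteMetric {T : Type} (d : T -> T -> R) : Prop :=
  forall x, exists r, 0 < r /\ forall y, d x y < r -> y = x.

(** bounded geometry: for every R > 0 the balls B_R(x) are finite with
    cardinality bounded uniformly in x (every duplicate-free list of points
    of B_R(x) has length <= N). *)
Definition BoundedGeometry {T : Type} (d : T -> T -> R) : Prop :=
  forall r, 0 < r -> exists N : nat, forall (x : T) (l : list T),
    NoDup l -> (forall y, In y l -> d x y <= r) -> (length l <= N)%nat.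

Definition CountableDiscreteBG {T : Type} (d : T -> T -> R) : Prop :=
  IsMetric d /\ CountableT T /\ DiscreteMetric d /\ BoundedGeometry d.

Definition InD {X Y : Type} (dX : X -> X -> R) (dY : Y -> Y -> R)
  (rho : (X + Y) -> (X + Y) -> R) : Prop :=
  IsMetric rho /\
  (forall a b, rho (inl a) (inl b) = dX a b) /\
  (forall a b, rho (inr a) (inr b) = dY a b).

Definition comp_metric {X Y Z : Type} (dX : X -> X -> R) (dZ : Z -> Z -> R)
  (dXY : (X + Y) -> (X + Y) -> R) (dYZ : (Y + Z) -> (Y + Z) -> R)
  : (X + Z) -> (X + Z) -> R :=
  fun u v =>
    match u, v with
    | inl a, inl b => dX a b
    | inr a, inr b => dZ a b
    | inl x, inr z
    | inr z, inl x =>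
        Rinf (fun r => exists y : Y, r = dXY (inl x) (inr y) + dYZ (inl y) (inr z))
    end.

Definition psum {T : Type} (f : T -> C) (l : list T) : R :=
  fold_right (fun x acc => Cnorm2 (f x) + acc) 0 l.

Definition InL2 {T : Type} (f : T -> C) : Prop :=
  exists B, forall l, NoDup l -> psum f l <= B.

(** squared l^2 norm *)
Definition norm2 {T : Type} (f : T -> C) : R :=
  Rsup (fun s => exists l, NoDup l /\ s = psum f l).

Definition delta {T : Type} (x : T) : T -> C :=
  fun y => if excluded_middle_informative (x = y) then C1 else C0.

(** * Operators H_X -> H_Y (only their values on l^2 vectors matter) *)
Definition Op (X Y : Type) : Type := (X -> C) -> (Y -> C).

Definition BoundedOp {X Y : Type} (T : Op X Y) : Prop :=
  (forall f, InL2 f -> InL2 (T f)) /\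
  (forall f g, InL2 f -> InL2 g ->
     forall y, T (fun x => Cadd (f x) (g x)) y = Cadd (T f y) (T g y)) /\
  (forall c f, InL2 f -> forall y, T (fun x => Cmul c (f x)) y = Cmul c (T f y)) /\
  (exists K, 0 <= K /\ forall f, InL2 f -> norm2 (T f) <= K * norm2 f).

Definition opsub {X Y : Type} (T S : Op X Y) : Op X Y :=
  fun f y => Cadd (T f y) (Copp (S f y)).

Definition OpClosure {X Y : Type} (P : Op X Y -> Prop) (T : Op X Y) : Prop :=
  BoundedOp T /\
  forall eps, 0 < eps -> exists S, P S /\
    forall f, InL2 f -> norm2 (opsub T S f) <= eps ^ 2 * norm2 f.

(** matrix coefficient T_{yx} = <T δ_x, δ_y> *)
Definition coef {X Y : Type} (T : Op X Y) (x : X) (y : Y) : C := T (delta x) y.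

Definition PropLess {X Y : Type} (rho : (X + Y) -> (X + Y) -> R) (T : Op X Y) (L : R) : Prop :=
  forall x y, rho (inl x) (inr y) >= L -> coef T x y = C0.

Definition FinitePropagation {X Y : Type} (rho : (X + Y) -> (X + Y) -> R) (T : Op X Y) : Prop :=
  exists L, PropLess rho T L.

Definition Mrho {X Y : Type} (rho : (X + Y) -> (X + Y) -> R) : Op X Y -> Prop :=
  OpClosure (fun S => BoundedOp S /\ FinitePropagation rho S).

(** M \hat\otimes N : closure of the linear span of compositions S ∘ T *)
Definition HatTensor {X Y Z : Type} (M : Op X Y -> Prop) (N : Op Y Z -> Prop) : Op X Z -> Prop :=
  OpClosure (fun U => exists l : list (C * Op X Y * Op Y Z),
    (forall c T S, In (c, T, S) l -> M T /\ N S) /\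
    forall f, InL2 f -> forall z,
      U f z = fold_right (fun p acc => Cadd (Cmul (fst (fst p)) ((snd p) ((snd (fst p)) f) z)) acc) C0 l).

(* Main.v *)
From Pilot Require Import Defs.
From Stdlib Require Import Reals Lra Lia Psatz List Classical ClassicalEpsilon FunctionalExtensionality.
Import ListNotations.
Import Pilot.Defs.
Open Scope R_scope.

Lemma C_ext (a b : C) : fst a = fst b -> snd a = snd b -> a = b.
Proof. destruct a, b; simpl; intros; subst; reflexivity. Qed.

Ltac Csolve := apply C_ext; unfold Cadd, Cmul, Copp, C0, C1; simpl; ring.

Lemma Cnorm2_ge0 a : 0 <= Cnorm2 a.
Proof. unfold Cnorm2; nra. Qed.
Lemma Cnorm2_add a b : Cnorm2 (Cadd a b) <= 2 * Cnorm2 a + 2 * Cnorm2 b.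
Proof. unfold Cnorm2, Cadd; simpl.
  pose proof (pow2_ge_0 (fst a - fst b)); pose proof (pow2_ge_0 (snd a - snd b)); nra. Qed.
Lemma Cnorm2_mul a b : Cnorm2 (Cmul a b) = Cnorm2 a * Cnorm2 b.
Proof. unfold Cnorm2, Cmul; simpl; ring. Qed.
Lemma Cnorm2_C0 : Cnorm2 C0 = 0.
Proof. unfold Cnorm2, C0; simpl; ring. Qed.
Lemma Cnorm2_C1 : Cnorm2 C1 = 1.
Proof. unfold Cnorm2, C1; simpl; ring. Qed.
Lemma Cnorm2_eq0 a : Cnorm2 a <= 0 -> a = C0.
Proof. unfold Cnorm2; intros H. destruct a as [p q]; simpl in *.
  assert (p = 0) by nra. assert (q = 0) by nra. subst; reflexivity. Qed.

Lemma Cadd_0l a : Cadd C0 a = a. Proof. Csolve. Qed.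
Lemma Cadd_0r a : Cadd a C0 = a. Proof. Csolve. Qed.
Lemma Cmul_0r a : Cmul a C0 = C0. Proof. Csolve. Qed.
Lemma Cmul_0l a : Cmul C0 a = C0. Proof. Csolve. Qed.
Lemma Cmul_1l a : Cmul C1 a = a. Proof. Csolve. Qed.
Lemma Cmul_1r a : Cmul a C1 = a. Proof. Csolve. Qed.
Lemma Cmul_comm a b : Cmul a b = Cmul b a. Proof. Csolve. Qed.

Lemma psum_ge0 {T} (f : T -> C) l : 0 <= psum f l.
Proof. induction l; simpl; [lra|]. pose proof (Cnorm2_ge0 (f a)); lra. Qed.

Lemma psum_app {T} (f : T -> C) l1 l2 : psum f (l1 ++ l2) = psum f l1 + psum f l2.
Proof. induction l1; simpl; [ring|]. rewrite IHl1; ring. Qed.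

Lemma psum_le {T} (f g h : T -> C) (a b : R) l :
  0 <= a -> 0 <= b ->
  (forall x, Cnorm2 (h x) <= a * Cnorm2 (f x) + b * Cnorm2 (g x)) ->
  psum h l <= a * psum f l + b * psum g l.
Proof. intros Ha Hb H; induction l; simpl; [lra|]. specialize (H a0). nra. Qed.

Definition L2set {T} (f : T -> C) := fun s => exists l, NoDup l /\ s = psum f l.

Lemma norm2_lub {T} (f : T -> C) : InL2 f -> is_lub (L2set f) (norm2 f).
Proof.
  intros [B HB]. unfold norm2, Rsup. apply epsilon_spec.
  destruct (completeness (L2set f)) as [m Hm].
  - exists B. intros s [l [Hl ->]]. apply HB; auto.
  - exists 0, nil. split; [constructor|reflexivity].
  - exists m; exact Hm.
Qed.

Lemma psum_le_norm2 {T} (f : T -> C) l : InL2 f -> NoDup l -> psum f l <= norm2 f.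
Proof. intros H Hl. apply (norm2_lub f H). exists l; auto. Qed.

Lemma norm2_ge0 {T} (f : T -> C) : InL2 f -> 0 <= norm2 f.
Proof. intros H. pose proof (psum_le_norm2 f nil H (NoDup_nil _)). simpl in H0; lra. Qed.

Lemma norm2_le {T} (f : T -> C) b : InL2 f -> (forall l, NoDup l -> psum f l <= b) -> norm2 f <= b.
Proof. intros H Hb. apply (norm2_lub f H). intros s [l [Hl ->]]. auto. Qed.

Lemma coord_le_norm2 {T} (f : T -> C) x : InL2 f -> Cnorm2 (f x) <= norm2 f.
Proof. intros H. pose proof (psum_le_norm2 f [x] H). simpl in H0.
  assert (NoDup [x]) by (constructor; [simpl; tauto| constructor]). specialize (H0 H1). lra. Qed.

Lemma norm2_comb {T} (f g h : T -> C) (a b : R) :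
  0 <= a -> 0 <= b -> InL2 f -> InL2 g ->
  (forall x, Cnorm2 (h x) <= a * Cnorm2 (f x) + b * Cnorm2 (g x)) ->
  InL2 h /\ norm2 h <= a * norm2 f + b * norm2 g.
Proof.
  intros Ha Hb Hf Hg H.
  assert (Hl : forall l, NoDup l -> psum h l <= a * norm2 f + b * norm2 g).
  { intros l Hl. pose proof (psum_le f g h a b l Ha Hb H).
    pose proof (psum_le_norm2 f l Hf Hl). pose proof (psum_le_norm2 g l Hg Hl). nra. }
  assert (InL2 h) by (exists (a * norm2 f + b * norm2 g); auto).
  split; auto. apply norm2_le; auto.
Qed.

Lemma norm2_comb1 {T} (f h : T -> C) (a : R) :
  0 <= a -> InL2 f -> (forall x, Cnorm2 (h x) <= a * Cnorm2 (f x)) ->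
  InL2 h /\ norm2 h <= a * norm2 f.
Proof. intros Ha Hf H. destruct (norm2_comb f f h a 0 Ha (Rle_refl 0) Hf Hf) as [H1 H2].
  { intros x; specialize (H x); lra. } split; auto; lra. Qed.

Lemma zero_L2 {T} : InL2 (fun _ : T => C0).
Proof. exists 0. intros l _. induction l; simpl; [lra|]. rewrite Cnorm2_C0; lra. Qed.

Lemma norm2_zero {T} : norm2 (fun _ : T => C0) = 0.
Proof. apply Rle_antisym; [|apply norm2_ge0, zero_L2].
  apply norm2_le; [apply zero_L2|]. intros l _. induction l; simpl; [lra|]. rewrite Cnorm2_C0; lra. Qed.

Lemma add_L2 {T} (f g : T -> C) : InL2 f -> InL2 g -> InL2 (fun x => Cadd (f x) (g x)).
Proof. intros Hf Hg. apply (norm2_comb f g _ 2 2); try lra; auto. intros; apply Cnorm2_add. Qed.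

Lemma norm2_add {T} (f g : T -> C) : InL2 f -> InL2 g ->
  norm2 (fun x => Cadd (f x) (g x)) <= 2 * norm2 f + 2 * norm2 g.
Proof. intros Hf Hg. apply (norm2_comb f g _ 2 2); try lra; auto. intros; apply Cnorm2_add. Qed.

Lemma scal_L2 {T} c (f : T -> C) : InL2 f -> InL2 (fun x => Cmul c (f x)).
Proof. intros Hf. apply (norm2_comb1 f _ (Cnorm2 c)); auto. apply Cnorm2_ge0.
  intros; rewrite Cnorm2_mul; lra. Qed.

Lemma norm2_scal {T} c (f : T -> C) : InL2 f -> norm2 (fun x => Cmul c (f x)) <= Cnorm2 c * norm2 f.
Proof. intros Hf. apply (norm2_comb1 f _ (Cnorm2 c)); auto. apply Cnorm2_ge0.
  intros; rewrite Cnorm2_mul; lra. Qed.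

Lemma dom_L2 {T} (f h : T -> C) : InL2 f -> (forall x, Cnorm2 (h x) <= Cnorm2 (f x)) -> InL2 h.
Proof. intros Hf H. apply (norm2_comb1 f h 1); auto; try lra. intros x; specialize (H x); lra. Qed.

Lemma psum_delta {T} (x : T) l : NoDup l -> psum (delta x) l <= 1.
Proof. induction 1; simpl; [lra|]. unfold delta at 1.
  destruct (excluded_middle_informative (x = x0)).
  - subst. rewrite Cnorm2_C1. assert (psum (delta x0) l = 0).
    { clear IHNoDup H0. induction l; simpl; auto. unfold delta at 1.
      destruct (excluded_middle_informative (x0 = a)). subst; simpl in H; tauto.
      rewrite Cnorm2_C0. rewrite IHl; [ring|]. simpl in H; tauto. }
    lra.
  - rewrite Cnorm2_C0; lra. Qed.

Lemma delta_L2 {T} (x : T) : InL2 (delta x).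
Proof. exists 1. intros; apply psum_delta; auto. Qed.
Lemma norm2_delta {T} (x : T) : norm2 (delta x) <= 1.
Proof. apply norm2_le. apply delta_L2. intros; apply psum_delta; auto. Qed.

Definition emi := excluded_middle_informative.

Lemma BO_zero {X Y} (S : Op X Y) y : BoundedOp S -> S (fun _ => C0) y = C0.
Proof. intros [H1 [H2 [H3 H4]]].
  assert (E : (fun _ : X => C0) = (fun x : X => Cmul C0 ((fun _ : X => C0) x))).
  { apply functional_extensionality; intros; rewrite Cmul_0l; auto. }
  rewrite E, H3 by apply zero_L2. apply Cmul_0l. Qed.

Lemma BO_add {X Y} (S : Op X Y) f g y : BoundedOp S -> InL2 f -> InL2 g ->
  S (fun x => Cadd (f x) (g x)) y = Cadd (S f y) (S g y).
Proof. intros [H1 [H2 [H3 H4]]] Hf Hg. auto. Qed.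

Lemma BO_scal {X Y} (S : Op X Y) c f y : BoundedOp S -> InL2 f ->
  S (fun x => Cmul c (f x)) y = Cmul c (S f y).
Proof. intros [H1 [H2 [H3 H4]]] Hf. auto. Qed.

Lemma BO_L2 {X Y} (S : Op X Y) f : BoundedOp S -> InL2 f -> InL2 (S f).
Proof. intros [H1 _] Hf; auto. Qed.

Definition mone : C := (-1, 0).
Lemma Copp_mul a : Copp a = Cmul mone a.
Proof. Csolve. Qed.

Lemma opp_L2 {T} (f : T -> C) : InL2 f -> InL2 (fun x => Copp (f x)).
Proof. intros H. assert (E : (fun x => Copp (f x)) = (fun x => Cmul mone (f x))).
  { apply functional_extensionality; intros; apply Copp_mul. }
  rewrite E; apply scal_L2; auto. Qed.

Lemma sub_L2 {T} (f g : T -> C) : InL2 f -> InL2 g -> InL2 (fun x => Cadd (f x) (Copp (g x))).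
Proof. intros; apply (add_L2 f (fun x => Copp (g x))); auto; apply opp_L2; auto. Qed.

Lemma BO_opp {X Y} (S : Op X Y) f y : BoundedOp S -> InL2 f ->
  S (fun x => Copp (f x)) y = Copp (S f y).
Proof. intros HS Hf. assert (E : (fun x => Copp (f x)) = (fun x => Cmul mone (f x))).
  { apply functional_extensionality; intros; apply Copp_mul. }
  rewrite E, BO_scal; auto. rewrite Copp_mul; auto. Qed.

Lemma BO_sub {X Y} (S : Op X Y) f g y : BoundedOp S -> InL2 f -> InL2 g ->
  S (fun x => Cadd (f x) (Copp (g x))) y = Cadd (S f y) (Copp (S g y)).
Proof. intros HS Hf Hg. rewrite (BO_add S f (fun x => Copp (g x))); auto.
  rewrite BO_opp; auto. apply opp_L2; auto. Qed.

Lemma BO_bound {X Y} (S : Op X Y) : BoundedOp S ->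
  exists K, 0 <= K /\ forall f, InL2 f -> norm2 (S f) <= K * norm2 f.
Proof. intros [_ [_ [_ H]]]; auto. Qed.

Definition csum {A} (l : list A) (F : A -> C) : C :=
  fold_right (fun a acc => Cadd (F a) acc) C0 l.

Lemma csum_zero {A} (l : list A) F : (forall a, In a l -> F a = C0) -> csum l F = C0.
Proof. induction l; simpl; intros H; auto. rewrite H, IHl by auto. apply Cadd_0l. Qed.

Definition restrict {X} (F : list X) (g : X -> C) : X -> C :=
  fun x => if emi (In x F) then g x else C0.

Lemma restrict_L2 {X} F (g : X -> C) : InL2 g -> InL2 (restrict F g).
Proof. intros H; apply (dom_L2 g); auto. intros x; unfold restrict; destruct emi; [lra|].
  rewrite Cnorm2_C0; apply Cnorm2_ge0. Qed.

Lemma FL {X Y} (S : Op X Y) g z F : BoundedOp S -> InL2 g -> NoDup F ->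
  S (restrict F g) z = csum F (fun x => Cmul (g x) (coef S x z)).
Proof.
  intros HS Hg HF. induction HF; simpl.
  - assert (E : restrict [] g = fun _ => C0).
    { apply functional_extensionality; intros; unfold restrict; destruct emi; simpl in *; tauto. }
    rewrite E; apply BO_zero; auto.
  - assert (E : restrict (x :: l) g = fun y => Cadd (Cmul (g x) (delta x y)) (restrict l g y)).
    { apply functional_extensionality; intros y; unfold restrict, delta.
      destruct (emi (In y (x :: l))) as [i|i]; destruct (excluded_middle_informative (x = y));
      destruct (emi (In y l)); subst; simpl in *; try tauto.
      - rewrite Cmul_1r, Cadd_0r; auto.
      - destruct i; [congruence|]. rewrite Cmul_0r, Cadd_0l; auto.
      - rewrite Cmul_0r, Cadd_0l; auto. }
    rewrite E, (BO_add S (fun y => Cmul (g x) (delta x y)) (restrict l g)); auto.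
    + rewrite BO_scal, IHHF; auto. apply delta_L2.
    + apply scal_L2, delta_L2.
    + apply restrict_L2; auto.
Qed.

Lemma tail_lemma {X} (g : X -> C) eps : InL2 g -> 0 < eps ->
  exists l, NoDup l /\ InL2 (fun x => if emi (In x l) then C0 else g x) /\
     norm2 (fun x => if emi (In x l) then C0 else g x) <= eps.
Proof.
  intros Hg He.
  assert (Hex : exists l, NoDup l /\ norm2 g - eps < psum g l).
  { apply NNPP; intros Hn. assert (norm2 g <= norm2 g - eps); [|lra].
    apply (norm2_lub g Hg). intros s [l [Hl ->]].
    apply Rnot_lt_le; intros Hlt; apply Hn; exists l; auto. }
  destruct Hex as [l [Hl Hlt]].
  assert (HL2 : InL2 (fun x => if emi (In x l) then C0 else g x)).
  { apply (dom_L2 g); auto. intros x; destruct emi; [|lra]. rewrite Cnorm2_C0; apply Cnorm2_ge0. }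
  exists l; split; [auto|split; [auto|]].
  apply norm2_le; auto. intros l' Hl'.
  set (p := fun x => if emi (In x l) then false else true).
  assert (E : psum (fun x => if emi (In x l) then C0 else g x) l' = psum g (filter p l')).
  { clear Hl'. induction l'; simpl; auto. unfold p; destruct emi; simpl; fold p.
    - rewrite Cnorm2_C0, IHl'; ring.
    - rewrite IHl'; auto. }
  rewrite E.
  assert (ND : NoDup (l ++ filter p l')).
  { apply NoDup_app; auto. apply NoDup_filter; auto.
    intros a Ha Hin. apply filter_In in Hin. destruct Hin as [_ Hp]. unfold p in Hp.
    destruct emi; [discriminate| tauto]. }
  pose proof (psum_le_norm2 g _ Hg ND). rewrite psum_app in H. lra.
Qed.

Lemma VL {X Y} (S : Op X Y) g z : BoundedOp S -> InL2 g ->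
  (forall x, g x <> C0 -> coef S x z = C0) -> S g z = C0.
Proof.
  intros HS Hg Hc. destruct (BO_bound S HS) as [K [HK HKb]].
  apply Cnorm2_eq0. apply Rnot_lt_le; intros Hpos.
  set (eps := Cnorm2 (S g z) / (2 * (K + 1))).
  assert (He : 0 < eps) by (unfold eps; apply Rdiv_lt_0_compat; lra).
  destruct (tail_lemma g eps Hg He) as [l [Hl [HrL2 Hr]]].
  set (r := fun x => if emi (In x l) then C0 else g x) in *.
  assert (Eg : g = fun x => Cadd (restrict l g x) (r x)).
  { apply functional_extensionality; intros x; unfold r, restrict; destruct emi.
    rewrite Cadd_0r; auto. rewrite Cadd_0l; auto. }
  assert (E1 : S (restrict l g) z = C0).
  { rewrite FL; auto. apply csum_zero. intros x _. destruct (classic (g x = C0)) as [e|e].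
    - rewrite e, Cmul_0l; auto.
    - rewrite (Hc x e), Cmul_0r; auto. }
  assert (E2 : S g z = S r z).
  { rewrite Eg at 1. rewrite BO_add; auto. rewrite E1, Cadd_0l; auto. apply restrict_L2; auto. }
  assert (B : Cnorm2 (S r z) <= K * eps).
  { eapply Rle_trans. apply coord_le_norm2. apply BO_L2; auto.
    eapply Rle_trans. apply HKb; auto. apply Rmult_le_compat_l; auto. }
  rewrite <- E2 in B. unfold eps in B.
  assert (K * (Cnorm2 (S g z) / (2 * (K + 1))) < Cnorm2 (S g z)); [|lra].
  unfold Rdiv. rewrite <- Rmult_assoc. 
  assert (K * Cnorm2 (S g z) < Cnorm2 (S g z) * (2 * (K+1))) by nra.
  apply (Rmult_lt_reg_r (2 * (K+1))); [lra|]. rewrite Rmult_assoc, Rinv_l by lra. lra.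
Qed.

Lemma MR {X Y} (S : Op X Y) g z F : BoundedOp S -> InL2 g -> NoDup F ->
  (forall x, coef S x z <> C0 -> In x F) ->
  S g z = csum F (fun x => Cmul (g x) (coef S x z)).
Proof.
  intros HS Hg HF Hc.
  set (r := fun x => if emi (In x F) then C0 else g x).
  assert (HrL2 : InL2 r).
  { apply (dom_L2 g); auto. intros x; unfold r; destruct emi; [|lra]. rewrite Cnorm2_C0; apply Cnorm2_ge0. }
  assert (Eg : g = fun x => Cadd (restrict F g x) (r x)).
  { apply functional_extensionality; intros x; unfold r, restrict; destruct emi.
    rewrite Cadd_0r; auto. rewrite Cadd_0l; auto. }
  rewrite Eg at 1. rewrite BO_add; auto; [|apply restrict_L2; auto].
  rewrite FL, (VL S r z); auto. rewrite Cadd_0r; auto.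
  intros x Hx. unfold r in Hx. destruct emi; [tauto|]. apply NNPP; intros H; apply n; auto.
Qed.

Lemma FinEnum {T} (E : T -> Prop) (N : nat) :
  (forall l, NoDup l -> (forall x, In x l -> E x) -> (length l <= N)%nat) ->
  exists l, NoDup l /\ forall x, In x l <-> E x.
Proof.
  intros HN.
  assert (G : forall m l, NoDup l -> (forall x, In x l -> E x) -> (N <= length l + m)%nat ->
     exists l', NoDup l' /\ forall x, In x l' <-> E x).
  { induction m; intros l Hl HE Hm.
    - exists l; split; auto. intros x; split; auto. intros Ex. apply NNPP; intros Hn.
      assert (NoDup (x :: l)) by (constructor; auto).
      specialize (HN _ H). simpl in HN. assert (S (length l) <= N)%nat.
      { apply HN. intros y [<-|Hy]; auto. } lia.
    - destruct (classic (forall x, E x -> In x l)) as [Hall|Hn].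
      + exists l; split; auto; intros x; split; auto.
      + apply not_all_ex_not in Hn. destruct Hn as [x Hx].
        apply imply_to_and in Hx. destruct Hx as [Ex Hx].
        apply (IHm (x :: l)). constructor; auto. intros y [<-|Hy]; auto. simpl; lia. }
  apply (G N (@nil T)); [constructor| simpl; tauto | simpl; lia].
Qed.

Lemma ballR {X Y} (dX : X -> X -> R) (dY : Y -> Y -> R) rho : InD dX dY rho -> BoundedGeometry dY -> forall L, 0 < L ->
  exists N, forall x (l : list Y), NoDup l -> (forall y, In y l -> rho (inl x) (inr y) < L) ->
  (length l <= N)%nat.
Proof.
  intros [[Hn [Hz [Hs Ht]]] [H1 H2]] HG L HL.
  destruct (HG (2 * L)) as [N HN]; [lra|]. exists N. intros x l Hl Hin.
  destruct l as [|y0 l']; [simpl; lia|].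
  apply (HN y0); auto. intros y Hy. rewrite <- H2.
  pose proof (Ht (inr y0) (inl x) (inr y)). rewrite (Hs (inr y0) (inl x)) in H.
  pose proof (Hin y0 (or_introl eq_refl)). pose proof (Hin y Hy). lra.
Qed.

Lemma ballL {X Y} (dX : X -> X -> R) (dY : Y -> Y -> R) rho : InD dX dY rho -> BoundedGeometry dX -> forall L, 0 < L ->
  exists N, forall y (l : list X), NoDup l -> (forall x, In x l -> rho (inl x) (inr y) < L) ->
  (length l <= N)%nat.
Proof.
  intros [[Hn [Hz [Hs Ht]]] [H1 H2]] HG L HL.
  destruct (HG (2 * L)) as [N HN]; [lra|]. exists N. intros y l Hl Hin.
  destruct l as [|x0 l']; [simpl; lia|].
  apply (HN x0); auto. intros x Hx. rewrite <- H1.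
  pose proof (Ht (inl x0) (inr y) (inl x)). rewrite (Hs (inr y) (inl x)) in H.
  pose proof (Hin x0 (or_introl eq_refl)). pose proof (Hin x Hx). lra.
Qed.

Lemma ballC {X Y Z} (dX : X -> X -> R) (dY : Y -> Y -> R) (dZ : Z -> Z -> R) dXY dYZ : InD dX dY dXY -> InD dY dZ dYZ -> BoundedGeometry dX ->
  forall L, 0 < L ->
  exists N, forall z (l : list X), NoDup l ->
   (forall x, In x l -> exists y, dXY (inl x) (inr y) + dYZ (inl y) (inr z) < L) ->
  (length l <= N)%nat.
Proof.
  intros [[Hn [Hz [Hs Ht]]] [H1 H2]] [[Hn' [Hz' [Hs' Ht']]] [H1' H2']] HG L HL.
  destruct (HG (2 * L)) as [N HN]; [lra|]. exists N. intros z l Hl Hin.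
  destruct l as [|x0 l']; [simpl; lia|].
  apply (HN x0); auto. intros x Hx. rewrite <- H1.
  destruct (Hin x0 (or_introl eq_refl)) as [y0 Hy0]. destruct (Hin x Hx) as [y Hy].
  pose proof (Ht (inl x0) (inr y0) (inl x)).
  pose proof (Ht (inr y0) (inr y) (inl x)).
  rewrite H2, <- H1' in H0. pose proof (Ht' (inl y0) (inr z) (inl y)).
  rewrite (Hs (inr y) (inl x)) in H0. rewrite (Hs' (inr z) (inl y)) in H3. lra.
Qed.

Lemma glb_exists (E : R -> Prop) : (exists r, E r) -> (forall r, E r -> 0 <= r) ->
  is_glb E (Rinf E).
Proof.
  intros [r0 Hr0] Hpos. unfold Rinf. apply epsilon_spec.
  destruct (completeness (fun r => E (- r))) as [m [Hm1 Hm2]].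
  - exists 0. intros r Hr. specialize (Hpos _ Hr). lra.
  - exists (- r0). rewrite Ropp_involutive; auto.
  - exists (- m). split.
    + intros r Hr. assert (- r <= m) by (apply Hm1; rewrite Ropp_involutive; auto). lra.
    + intros b Hb. assert (m <= - b); [|lra]. apply Hm2. intros r Hr. specialize (Hb _ Hr). lra.
Qed.

Section Comp.
Context {X Y Z : Type} (dX : X -> X -> R) (dY : Y -> Y -> R) (dZ : Z -> Z -> R)
  (dXY : (X + Y) -> (X + Y) -> R) (dYZ : (Y + Z) -> (Y + Z) -> R)
  (hXY : InD dX dY dXY) (hYZ : InD dY dZ dYZ) (hYne : inhabited Y).

Lemma comp_glb x z : is_glb (fun r => exists y : Y, r = dXY (inl x) (inr y) + dYZ (inl y) (inr z))
   (comp_metric dX dZ dXY dYZ (inl x) (inr z)).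
Proof.
  simpl. apply glb_exists.
  - destruct hYne as [y]. exists (dXY (inl x) (inr y) + dYZ (inl y) (inr z)), y; reflexivity.
  - intros r [y ->]. destruct hXY as [[Hn _] _]. destruct hYZ as [[Hn' _] _].
    specialize (Hn (inl x) (inr y)); specialize (Hn' (inl y) (inr z)); lra.
Qed.

Lemma comp_le x y z : comp_metric dX dZ dXY dYZ (inl x) (inr z) <= dXY (inl x) (inr y) + dYZ (inl y) (inr z).
Proof. apply (proj1 (comp_glb x z)). eauto. Qed.

Lemma comp_lt x z L : comp_metric dX dZ dXY dYZ (inl x) (inr z) < L ->
  exists y, dXY (inl x) (inr y) + dYZ (inl y) (inr z) < L.
Proof.
  intros H. apply NNPP; intros Hn.
  assert (L <= comp_metric dX dZ dXY dYZ (inl x) (inr z)); [|lra].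
  apply (proj2 (comp_glb x z)). intros r [y ->]. apply Rnot_lt_le; intros Hl; apply Hn; eauto.
Qed.
End Comp.

Section Fib.
Context {A B : Type} (phi : B -> option A) (v : A -> R).

Definition vof (b : B) : R := match phi b with Some a => v a | None => 0 end.
Definition vsum (l : list B) : R := fold_right (fun b acc => vof b + acc) 0 l.
Definition asum (l : list A) : R := fold_right (fun a acc => v a + acc) 0 l.

Lemma vsum_filter (p : B -> bool) l :
  vsum l = vsum (filter p l) + vsum (filter (fun x => negb (p x)) l).
Proof. induction l; simpl; [lra|]. destruct (p a); simpl; rewrite IHl; ring. Qed.

Lemma vsum_const a l : (forall b, In b l -> phi b = Some a) -> vsum l = INR (length l) * v a.
Proof. induction l; unfold vsum in *; cbn [fold_right length]; intros H; [simpl; lra|]. unfold vof at 1. rewrite (H a0 (or_introl eq_refl)).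
  rewrite IHl. rewrite S_INR; ring. intros b Hb; apply H; simpl; auto. Qed.

Lemma fiber_sum N : (forall a, 0 <= v a) ->
 (forall a l, NoDup l -> (forall b, In b l -> phi b = Some a) -> (length l <= N)%nat) ->
 forall l, NoDup l -> exists As, NoDup As /\
   (forall a, In a As -> exists b, In b l /\ phi b = Some a) /\
   vsum l <= INR N * asum As.
Proof.
  intros Hv HN.
  assert (G : forall n l, (length l <= n)%nat -> NoDup l -> exists As, NoDup As /\
   (forall a, In a As -> exists b, In b l /\ phi b = Some a) /\ vsum l <= INR N * asum As).
  { induction n; intros l Hlen Hl.
    - destruct l; simpl in Hlen; [|lia]. exists nil; simpl; split; [constructor|split; [tauto|lra]].
    - destruct l as [|b0 l']. { exists nil; simpl; split; [constructor|split; [tauto|lra]]. }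
      simpl in Hlen. inversion Hl; subst.
      destruct (phi b0) as [a|] eqn:Eb.
      + set (p := fun b => if excluded_middle_informative (phi b = Some a) then true else false).
        set (l2 := filter (fun x => negb (p x)) (b0 :: l')).
        assert (El2 : l2 = filter (fun x => negb (p x)) l').
        { unfold l2; simpl. unfold p at 1. destruct excluded_middle_informative; [reflexivity|congruence]. }
        assert (Hlen2 : (length l2 <= n)%nat). { rewrite El2. pose proof (filter_length_le (fun x => negb (p x)) l'). lia. }
        destruct (IHn l2 Hlen2) as [As2 [HA1 [HA2 HA3]]]. { apply NoDup_filter; auto. }
        exists (a :: As2). split; [|split].
        * constructor; auto. intros Hin. destruct (HA2 a Hin) as [b [Hb1 Hb2]].
          unfold l2 in Hb1. apply filter_In in Hb1. destruct Hb1 as [_ Hb1]. unfold p in Hb1.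
          destruct excluded_middle_informative; simpl in Hb1; congruence.
        * intros a' [<-|Ha']. exists b0; split; simpl; auto.
          destruct (HA2 a' Ha') as [b [Hb1 Hb2]]. exists b; split; auto.
          unfold l2 in Hb1. apply filter_In in Hb1; tauto.
        * rewrite (vsum_filter p). fold l2.
          assert (Hv1 : vsum (filter p (b0 :: l')) <= INR N * v a).
          { rewrite (vsum_const a). apply Rmult_le_compat_r; auto. apply le_INR. apply (HN a).
            apply NoDup_filter; auto. intros b Hb; apply filter_In in Hb. destruct Hb as [_ Hb]; unfold p in Hb.
            destruct excluded_middle_informative; congruence.
            intros b Hb; apply filter_In in Hb. destruct Hb as [_ Hb]; unfold p in Hb.
            destruct excluded_middle_informative; congruence. }
          simpl asum. lra.
      + destruct (IHn l' ltac:(lia) H2) as [As [HA1 [HA2 HA3]]].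
        exists As; split; auto; split.
        * intros a Ha; destruct (HA2 a Ha) as [b [? ?]]; exists b; simpl; auto.
        * simpl. unfold vof at 1; rewrite Eb. lra. }
  intros l Hl. apply (G (length l)); auto.
Qed.
End Fib.

Definition PB {A B} (phi : B -> option A) (w : B -> C) : Op A B :=
  fun g b => match phi b with Some a => Cmul (w b) (g a) | None => C0 end.

Lemma PB_BO {A B} (phi : B -> option A) (w : B -> C) M N : 0 <= M ->
  (forall b, Cnorm2 (w b) <= M) ->
  (forall a l, NoDup l -> (forall b, In b l -> phi b = Some a) -> (length l <= N)%nat) ->
  BoundedOp (PB phi w).
Proof.
  intros HM Hw HN.
  assert (Hb : forall g, InL2 g -> forall l, NoDup l -> psum (PB phi w g) l <= M * INR N * norm2 g).
  { intros g Hg l Hl.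
    destruct (fiber_sum phi (fun a => Cnorm2 (g a)) N (fun a => Cnorm2_ge0 _) HN l Hl) as [As [HA1 [_ HA3]]].
    assert (E : asum (fun a => Cnorm2 (g a)) As = psum g As).
    { clear. induction As; simpl; auto. }
    rewrite E in HA3. pose proof (psum_le_norm2 g As Hg HA1).
    assert (psum (PB phi w g) l <= M * vsum phi (fun a => Cnorm2 (g a)) l).
    { clear -Hw HM. induction l; simpl; [lra|]. unfold PB at 1, vof at 1. destruct (phi a).
      - rewrite Cnorm2_mul. pose proof (Hw a). pose proof (Cnorm2_ge0 (g a0)). nra.
      - rewrite Cnorm2_C0. lra. }
    pose proof (pos_INR N).
    assert (M * vsum phi (fun a => Cnorm2 (g a)) l <= M * (INR N * psum g As)) by (apply Rmult_le_compat_l; auto).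
    assert (INR N * psum g As <= INR N * norm2 g) by (apply Rmult_le_compat_l; auto).
    assert (M * (INR N * psum g As) <= M * (INR N * norm2 g)) by (apply Rmult_le_compat_l; auto).
    lra. }
  assert (HL : forall g, InL2 g -> InL2 (PB phi w g)).
  { intros g Hg. exists (M * INR N * norm2 g). auto. }
  split; [auto|split; [|split]].
  - intros f g _ _ y. unfold PB. destruct (phi y); [Csolve| rewrite Cadd_0l; auto].
  - intros c f _ y. unfold PB. destruct (phi y); [Csolve| rewrite Cmul_0r; auto].
  - exists (M * INR N). split. pose proof (pos_INR N); nra.
    intros f Hf. apply norm2_le; auto.
Qed.

Lemma in_closure_self {X Y} (P : Op X Y -> Prop) T : BoundedOp T -> P T -> OpClosure P T.
Proof.
  intros HT HP. split; auto. intros eps He. exists T. split; auto. intros f Hf.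
  assert (E : opsub T T f = fun _ => C0).
  { apply functional_extensionality; intros y; unfold opsub; Csolve. }
  rewrite E, norm2_zero. pose proof (norm2_ge0 f Hf). pose proof (pow2_ge_0 eps). nra.
Qed.

Lemma comp_BO {X Y Z} (T : Op X Y) (S : Op Y Z) : BoundedOp T -> BoundedOp S ->
  BoundedOp (fun f => S (T f)).
Proof.
  intros HT HS. destruct (BO_bound T HT) as [KT [HKT HT']]. destruct (BO_bound S HS) as [KS [HKS HS']].
  split; [|split; [|split]].
  - intros f Hf; apply BO_L2; auto; apply BO_L2; auto.
  - intros f g Hf Hg y.
    assert (E : T (fun x => Cadd (f x) (g x)) = fun x => Cadd (T f x) (T g x)).
    { apply functional_extensionality; intros; apply BO_add; auto. }
    rewrite E. apply BO_add; auto; apply BO_L2; auto.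
  - intros c f Hf y.
    assert (E : T (fun x => Cmul c (f x)) = fun x => Cmul c (T f x)).
    { apply functional_extensionality; intros; apply BO_scal; auto. }
    rewrite E. apply BO_scal; auto; apply BO_L2; auto.
  - exists (KS * KT). split; [nra|]. intros f Hf.
    eapply Rle_trans. apply HS'; apply BO_L2; auto.
    rewrite Rmult_assoc. apply Rmult_le_compat_l; auto.
Qed.

Lemma sum_BO {X Y} (A B : Op X Y) : BoundedOp A -> BoundedOp B ->
  BoundedOp (fun f y => Cadd (A f y) (B f y)).
Proof.
  intros HA HB. destruct (BO_bound A HA) as [KA [HKA HA']]. destruct (BO_bound B HB) as [KB [HKB HB']].
  split; [|split; [|split]].
  - intros f Hf; apply add_L2; apply BO_L2; auto.
  - intros f g Hf Hg y. rewrite !BO_add; auto. Csolve.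
  - intros c f Hf y. rewrite !BO_scal; auto. Csolve.
  - exists (2 * KA + 2 * KB). split; [lra|]. intros f Hf.
    eapply Rle_trans. apply norm2_add; apply BO_L2; auto.
    specialize (HA' f Hf); specialize (HB' f Hf). lra.
Qed.

Lemma scal_BO {X Y} c (A : Op X Y) : BoundedOp A -> BoundedOp (fun f y => Cmul c (A f y)).
Proof.
  intros HA. destruct (BO_bound A HA) as [KA [HKA HA']].
  split; [|split; [|split]].
  - intros f Hf; apply scal_L2; apply BO_L2; auto.
  - intros f g Hf Hg y. rewrite !BO_add; auto. Csolve.
  - intros d f Hf y. rewrite !BO_scal; auto. Csolve.
  - exists (Cnorm2 c * KA). split. pose proof (Cnorm2_ge0 c); nra. intros f Hf.
    eapply Rle_trans. apply norm2_scal; apply BO_L2; auto.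
    rewrite Rmult_assoc. apply Rmult_le_compat_l; auto. apply Cnorm2_ge0.
Qed.

Lemma zero_BO {X Y} : BoundedOp (fun (f : X -> C) (y : Y) => C0).
Proof.
  split; [|split; [|split]].
  - intros; apply zero_L2.
  - intros; Csolve.
  - intros; Csolve.
  - exists 0. split; [lra|]. intros f Hf. rewrite norm2_zero. lra.
Qed.

Lemma sq_eps e : 0 < e -> exists eps, 0 < eps /\ eps ^ 2 = e.
Proof. intros He. exists (sqrt e). split. apply sqrt_lt_R0; auto. simpl. rewrite Rmult_1_r. apply sqrt_sqrt; lra. Qed.

Lemma Mrho_approx {X Y} (rho : (X + Y) -> (X + Y) -> R) T : Mrho rho T -> forall e, 0 < e ->
  exists T', BoundedOp T' /\ FinitePropagation rho T' /\ forall f, InL2 f -> norm2 (opsub T T' f) <= e * norm2 f.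
Proof.
  intros [HT Ha] e He. destruct (sq_eps e He) as [eps [Heps Ee]].
  destruct (Ha eps Heps) as [T' [[H1 H2] H3]]. exists T'. split; auto. split; auto. rewrite <- Ee; auto.
Qed.

Lemma opsub_L2 {X Y} (A B : Op X Y) f : BoundedOp A -> BoundedOp B -> InL2 f -> InL2 (opsub A B f).
Proof. intros; unfold opsub; apply sub_L2; apply BO_L2; auto. Qed.

Section Dir1.
Context {X Y Z : Type} (dX : X -> X -> R) (dY : Y -> Y -> R) (dZ : Z -> Z -> R)
  (dXY : (X + Y) -> (X + Y) -> R) (dYZ : (Y + Z) -> (Y + Z) -> R)
  (hXY : InD dX dY dXY) (hYZ : InD dY dZ dYZ) (hYne : inhabited Y).

Let comp := comp_metric dX dZ dXY dYZ.

Lemma comp_FP (T : Op X Y) (S : Op Y Z) : BoundedOp T -> BoundedOp S ->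
  FinitePropagation dXY T -> FinitePropagation dYZ S -> FinitePropagation comp (fun f => S (T f)).
Proof.
  intros HT HS [L1 H1] [L2 H2]. exists (L1 + L2). intros x z Hxz. unfold coef.
  apply VL; auto. apply BO_L2; auto; apply delta_L2.
  intros y Hy. apply H2. apply Rle_ge.
  assert (dXY (inl x) (inr y) < L1).
  { apply Rnot_le_lt; intros Hn. apply Hy. apply H1. lra. }
  pose proof (comp_le dX dY dZ dXY dYZ hXY hYZ hYne x y z). unfold comp in Hxz. lra.
Qed.

Lemma sum_FP {A B} (rho : (A + B) -> (A + B) -> R) (U V : Op A B) :
  FinitePropagation rho U -> FinitePropagation rho V ->
  FinitePropagation rho (fun f y => Cadd (U f y) (V f y)).
Proof.
  intros [L1 H1] [L2 H2]. exists (Rmax L1 L2). intros x y Hxy. change (Cadd (coef U x y) (coef V x y) = C0).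
  pose proof (Rmax_l L1 L2); pose proof (Rmax_r L1 L2).
  rewrite (H1 x y), (H2 x y) by lra. apply Cadd_0l.
Qed.

Lemma scal_FP {A B} (rho : (A + B) -> (A + B) -> R) c (U : Op A B) :
  FinitePropagation rho U -> FinitePropagation rho (fun f y => Cmul c (U f y)).
Proof. intros [L1 H1]. exists L1. intros x y Hxy. change (Cmul c (coef U x y) = C0). rewrite (H1 x y) by lra. apply Cmul_0r. Qed.

Lemma zero_FP {A B} (rho : (A + B) -> (A + B) -> R) : FinitePropagation rho (fun (f : A -> C) (y : B) => C0).
Proof. exists 0. intros x y _. reflexivity. Qed.

Lemma term_approx (T : Op X Y) (S : Op Y Z) c : Mrho dXY T -> Mrho dYZ S -> forall eta, 0 < eta ->
  exists W, BoundedOp W /\ FinitePropagation comp W /\ forall f, InL2 f ->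
    norm2 (fun z => Cadd (Cmul c (S (T f) z)) (Copp (W f z))) <= eta * norm2 f.
Proof.
  intros HTm HSm eta Heta.
  pose proof (proj1 HTm) as HT. pose proof (proj1 HSm) as HS.
  destruct (BO_bound S HS) as [KS [HKS HS']].
  set (eta' := eta / (Cnorm2 c + 1)).
  assert (Heta' : 0 < eta') by (unfold eta'; pose proof (Cnorm2_ge0 c); apply Rdiv_lt_0_compat; lra).
  set (e1 := eta' / (4 * (KS + 1))).
  assert (He1 : 0 < e1) by (unfold e1; apply Rdiv_lt_0_compat; lra).
  destruct (Mrho_approx dXY T HTm e1 He1) as [T' [HT'b [HT'f HT'a]]].
  destruct (BO_bound T' HT'b) as [KT [HKT HT'']].
  set (e2 := eta' / (4 * (KT + 1))).
  assert (He2 : 0 < e2) by (unfold e2; apply Rdiv_lt_0_compat; lra).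
  destruct (Mrho_approx dYZ S HSm e2 He2) as [S' [HS'b [HS'f HS'a]]].
  exists (fun f z => Cmul c (S' (T' f) z)). split; [|split].
  - apply scal_BO, comp_BO; auto.
  - apply scal_FP, comp_FP; auto.
  - intros f Hf.
    assert (Hnf := norm2_ge0 f Hf).
    set (a := fun z => Cadd (S (T f) z) (Copp (S (T' f) z))).
    set (b := opsub S S' (T' f)).
    assert (HaL2 : InL2 a) by (apply sub_L2; apply BO_L2; auto; apply BO_L2; auto).
    assert (HbL2 : InL2 b) by (apply opsub_L2; auto; apply BO_L2; auto).
    assert (Ea : a = S (opsub T T' f)).
    { apply functional_extensionality; intros z. unfold a, opsub. rewrite BO_sub; auto; apply BO_L2; auto. }
    assert (Na : norm2 a <= KS * (e1 * norm2 f)).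
    { rewrite Ea. eapply Rle_trans. apply HS'. apply opsub_L2; auto.
      apply Rmult_le_compat_l; auto. }
    assert (Nb : norm2 b <= e2 * (KT * norm2 f)).
    { eapply Rle_trans. apply HS'a. apply BO_L2; auto. apply Rmult_le_compat_l; [lra|]. auto. }
    assert (E : (fun z => Cadd (Cmul c (S (T f) z)) (Copp (Cmul c (S' (T' f) z))))
              = fun z => Cmul c (Cadd (a z) (b z))).
    { apply functional_extensionality; intros z. unfold a, b, opsub. Csolve. }
    rewrite E. eapply Rle_trans. apply norm2_scal. apply add_L2; auto.
    pose proof (norm2_add a b HaL2 HbL2).
    assert (KS * e1 <= eta' / 4).
    { unfold e1. unfold Rdiv. rewrite Rinv_mult. 
      assert (KS * / (KS + 1) <= 1).
      { apply (Rmult_le_reg_r (KS + 1)); [lra|]. rewrite Rmult_assoc, Rinv_l by lra. lra. }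
      assert (0 < / 4) by lra. assert (0 < / (KS + 1)) by (apply Rinv_0_lt_compat; lra).
      replace (KS * (eta' * (/ 4 * / (KS + 1)))) with ((KS * / (KS + 1)) * (eta' * / 4)) by ring.
      assert (0 <= eta' * / 4) by nra. nra. }
    assert (e2 * KT <= eta' / 4).
    { unfold e2. unfold Rdiv. rewrite Rinv_mult.
      assert (KT * / (KT + 1) <= 1).
      { apply (Rmult_le_reg_r (KT + 1)); [lra|]. rewrite Rmult_assoc, Rinv_l by lra. lra. }
      assert (0 < / 4) by lra. assert (0 < / (KT + 1)) by (apply Rinv_0_lt_compat; lra).
      replace (eta' * (/ 4 * / (KT + 1)) * KT) with ((KT * / (KT + 1)) * (eta' * / 4)) by ring.
      assert (0 <= eta' * / 4) by nra. nra. }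
    assert (HN : norm2 (fun z => Cadd (a z) (b z)) <= eta' * norm2 f) by nra.
    assert (Cnorm2 c * eta' <= eta).
    { unfold eta'. unfold Rdiv. pose proof (Cnorm2_ge0 c).
      apply (Rmult_le_reg_r (Cnorm2 c + 1)); [lra|].
      replace (Cnorm2 c * (eta * / (Cnorm2 c + 1)) * (Cnorm2 c + 1)) with (Cnorm2 c * eta * ((Cnorm2 c + 1) * / (Cnorm2 c + 1))) by ring.
      rewrite Rinv_r by lra. nra. }
    pose proof (Cnorm2_ge0 c).
    assert (Cnorm2 c * norm2 (fun z => Cadd (a z) (b z)) <= Cnorm2 c * (eta' * norm2 f)) by (apply Rmult_le_compat_l; auto).
    nra.
Qed.

Definition Vl (l : list (C * Op X Y * Op Y Z)) (f : X -> C) (z : Z) : C :=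
  fold_right (fun p acc => Cadd (Cmul (fst (fst p)) ((snd p) ((snd (fst p)) f) z)) acc) C0 l.

Lemma span_approx l : (forall c T S, In (c, T, S) l -> Mrho dXY T /\ Mrho dYZ S) ->
  forall eta, 0 < eta -> exists W, BoundedOp W /\ FinitePropagation comp W /\
   forall f, InL2 f -> InL2 (Vl l f) /\ norm2 (fun z => Cadd (Vl l f z) (Copp (W f z))) <= eta * norm2 f.
Proof.
  induction l as [|[[c T] S] l IH]; intros Hl eta Heta.
  - exists (fun f z => C0). split; [apply zero_BO|split; [apply zero_FP|]].
    intros f Hf. unfold Vl; simpl. split; [apply zero_L2|].
    assert (E : (fun _ : Z => Cadd C0 (Copp C0)) = fun _ => C0) by (apply functional_extensionality; intros; Csolve).
    rewrite E, norm2_zero. pose proof (norm2_ge0 f Hf); nra.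
  - destruct (Hl c T S (or_introl eq_refl)) as [HT HS].
    destruct (term_approx T S c HT HS (eta / 4)) as [W1 [HW1b [HW1f HW1a]]]; [lra|].
    destruct (IH (fun c T S H => Hl c T S (or_intror H)) (eta / 4)) as [W2 [HW2b [HW2f HW2a]]]; [lra|].
    exists (fun f y => Cadd (W1 f y) (W2 f y)). split; [apply sum_BO; auto|split; [apply sum_FP; auto|]].
    intros f Hf. destruct (HW2a f Hf) as [HV HVn].
    assert (HTf : InL2 (fun z => Cmul c (S (T f) z))).
    { apply scal_L2. apply BO_L2. apply HS. apply BO_L2; auto. apply HT. }
    split.
    + change (InL2 (fun z => Cadd (Cmul c (S (T f) z)) (Vl l f z))). apply add_L2; auto.
    + set (a := fun z => Cadd (Cmul c (S (T f) z)) (Copp (W1 f z))).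
      set (b := fun z => Cadd (Vl l f z) (Copp (W2 f z))).
      assert (HaL2 : InL2 a) by (apply sub_L2; auto; apply BO_L2; auto).
      assert (HbL2 : InL2 b) by (apply sub_L2; auto; apply BO_L2; auto).
      assert (E : (fun z => Cadd (Vl ((c, T, S) :: l) f z) (Copp (Cadd (W1 f z) (W2 f z))))
                = fun z => Cadd (a z) (b z)).
      { apply functional_extensionality; intros z. unfold a, b, Vl; simpl. Csolve. }
      rewrite E. eapply Rle_trans. apply norm2_add; auto.
      specialize (HW1a f Hf). fold a in HW1a. fold b in HVn. lra.
Qed.

Lemma dir1 U : HatTensor (Mrho dXY) (Mrho dYZ) U -> Mrho comp U.
Proof.
  intros [HU Ha]. split; auto. intros eps Heps.
  destruct (Ha (eps / 2)) as [V [[l [Hl HV]] HVa]]; [lra|].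
  destruct (span_approx l Hl (eps ^ 2 / 4)) as [W [HWb [HWf HWa]]].
  { pose proof (pow_lt eps 2 Heps). lra. }
  exists W. split; [split; auto|]. intros f Hf.
  destruct (HWa f Hf) as [HVL2 HVn].
  assert (EV : V f = Vl l f) by (apply functional_extensionality; intros; apply HV; auto).
  specialize (HVa f Hf). unfold opsub in HVa. rewrite EV in HVa.
  set (a := fun z => Cadd (U f z) (Copp (Vl l f z))) in *.
  set (b := fun z => Cadd (Vl l f z) (Copp (W f z))) in *.
  assert (HaL2 : InL2 a) by (apply sub_L2; auto; apply BO_L2; auto).
  assert (HbL2 : InL2 b) by (apply sub_L2; auto; apply BO_L2; auto).
  assert (E : opsub U W f = fun z => Cadd (a z) (b z)).
  { apply functional_extensionality; intros z; unfold opsub, a, b; Csolve. }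
  rewrite E. eapply Rle_trans. apply norm2_add; auto.
  replace ((eps / 2) ^ 2) with (eps ^ 2 / 4) in HVa by (simpl; field). lra.
Qed.
End Dir1.

Lemma csum_app {A} (l1 l2 : list A) F : csum (l1 ++ l2) F = Cadd (csum l1 F) (csum l2 F).
Proof. induction l1; simpl. rewrite Cadd_0l; auto. rewrite IHl1; Csolve. Qed.

Lemma csum_flat_map {A B} (g : A -> list B) L F :
  csum (flat_map g L) F = csum L (fun k => csum (g k) F).
Proof. induction L; simpl; auto. rewrite csum_app, IHL; auto. Qed.

Lemma csum_map {A B} (h : A -> B) L F : csum (map h L) F = csum L (fun j => F (h j)).
Proof. induction L; simpl; auto. rewrite IHL; auto. Qed.

Lemma csum_ext {A} (l : list A) F G : (forall a, In a l -> F a = G a) -> csum l F = csum l G.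
Proof. induction l; simpl; intros H; auto. rewrite H, IHl; auto. Qed.

Lemma csum_seq_ind (i : nat) v : forall n s,
  csum (seq s n) (fun j => if Nat.eq_dec j i then v else C0) =
  if andb (Nat.leb s i) (Nat.ltb i (s + n)) then v else C0.
Proof.
  induction n; intros s; simpl.
  - destruct (Nat.leb_spec s i); destruct (Nat.ltb_spec i (s + 0)); simpl; auto; lia.
  - rewrite IHn. destruct (Nat.eq_dec s i).
    + subst. destruct (Nat.leb_spec (S i) i); [lia|]. simpl.
      rewrite Nat.leb_refl. destruct (Nat.ltb_spec i (i + S n)); [|lia]. simpl. apply Cadd_0r.
    + rewrite Cadd_0l. destruct (Nat.leb_spec (S s) i); destruct (Nat.leb_spec s i);
      destruct (Nat.ltb_spec i (S s + n)); destruct (Nat.ltb_spec i (s + S n)); simpl; auto; lia.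
Qed.

Lemma csum_nth_single {X} (Gl : list X) x v N : NoDup Gl -> In x Gl -> (length Gl <= N)%nat ->
  csum (seq 0 N) (fun j => if excluded_middle_informative (nth_error Gl j = Some x) then v else C0) = v.
Proof.
  intros HND Hin HN. destruct (In_nth_error _ _ Hin) as [i Hi].
  assert (Hil : (i < length Gl)%nat) by (apply nth_error_Some; congruence).
  rewrite (csum_ext _ _ (fun j => if Nat.eq_dec j i then v else C0)).
  - rewrite csum_seq_ind. destruct (Nat.leb_spec 0 i); destruct (Nat.ltb_spec i (0 + N)); simpl; auto; lia.
  - intros j _. destruct excluded_middle_informative as [e|e]; destruct (Nat.eq_dec j i); subst; auto.
    + exfalso. apply n. symmetry. apply (proj1 (NoDup_nth_error Gl) HND i j Hil). congruence.
    + congruence.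
Qed.

Lemma csum_seq_nth {X} (H : X -> C) : forall (Fl : list X) N, (length Fl <= N)%nat ->
  csum (seq 0 N) (fun k => match nth_error Fl k with Some x => H x | None => C0 end) = csum Fl H.
Proof.
  induction Fl; intros N HN; simpl.
  - apply csum_zero. intros k _. destruct k; reflexivity.
  - destruct N as [|N]; simpl in HN; [lia|]. simpl. rewrite <- seq_shift, csum_map. cbn [nth_error].
    rewrite (IHFl N); auto. lia.
Qed.

Section Dir2.
Context {X Y Z : Type} (dX : X -> X -> R) (dY : Y -> Y -> R) (dZ : Z -> Z -> R)
  (hX : BoundedGeometry dX) (hY : BoundedGeometry dY) (hZ : BoundedGeometry dZ)
  (dXY : (X + Y) -> (X + Y) -> R) (dYZ : (Y + Z) -> (Y + Z) -> R)
  (hXY : InD dX dY dXY) (hYZ : InD dY dZ dYZ) (hYne : inhabited Y).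

Let comp := comp_metric dX dZ dXY dYZ.

Lemma coef_bound {A B} (S : Op A B) : BoundedOp S -> exists K, 0 <= K /\ forall x y, Cnorm2 (coef S x y) <= K.
Proof.
  intros HS. destruct (BO_bound S HS) as [K [HK HK']]. exists K. split; auto. intros x y.
  eapply Rle_trans. apply (coord_le_norm2 (S (delta x)) y). apply BO_L2; auto; apply delta_L2.
  eapply Rle_trans. apply HK'. apply delta_L2. pose proof (norm2_delta x). nra.
Qed.

Lemma KD (S : Op X Z) : BoundedOp S -> FinitePropagation comp S ->
  exists l, (forall c T S', In (c, T, S') l -> Mrho dXY T /\ Mrho dYZ S') /\
    forall f, InL2 f -> forall z, S f z = Vl l f z.
Proof.
  intros HS [L0 HL0].
  set (L := Rmax L0 1).
  assert (HL : 0 < L) by (unfold L; pose proof (Rmax_r L0 1); lra).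
  assert (HSL : PropLess comp S L).
  { intros x z H. apply HL0. pose proof (Rmax_l L0 1). unfold L in H. lra. }
  assert (Hnn1 : forall a b, 0 <= dXY a b) by (destruct hXY as [[H _] _]; auto).
  assert (Hnn2 : forall a b, 0 <= dYZ a b) by (destruct hYZ as [[H _] _]; auto).
  destruct (ballC dX dY dZ dXY dYZ hXY hYZ hX L HL) as [N1 HN1].
  destruct (ballL dX dY dXY hXY hX L HL) as [N2 HN2].
  destruct (ballR dX dY dXY hXY hY L HL) as [NR HNR].
  destruct (ballR dY dZ dYZ hYZ hZ L HL) as [NZ HNZ].
  set (E := fun z x => exists y, dXY (inl x) (inr y) + dYZ (inl y) (inr z) < L).
  set (F := fun z => epsilon (inhabits (@nil X)) (fun l => NoDup l /\ forall x, In x l <-> E z x)).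
  assert (HF : forall z, NoDup (F z) /\ forall x, In x (F z) <-> E z x).
  { intros z. unfold F. apply epsilon_spec. apply (FinEnum (E z) N1). intros; apply (HN1 z); auto. }
  assert (HFl : forall z, (length (F z) <= N1)%nat).
  { intros z. apply (HN1 z). apply HF. intros x Hx. apply (proj2 (HF z)); auto. }
  set (G := fun y => epsilon (inhabits (@nil X)) (fun l => NoDup l /\ forall x, In x l <-> dXY (inl x) (inr y) < L)).
  assert (HG : forall y, NoDup (G y) /\ forall x, In x (G y) <-> dXY (inl x) (inr y) < L).
  { intros y. unfold G. apply epsilon_spec. apply (FinEnum _ N2). intros; apply (HN2 y); auto. }
  assert (HGl : forall y, (length (G y) <= N2)%nat).
  { intros y. apply (HN2 y). apply HG. intros x Hx. apply (proj2 (HG y)); auto. }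
  set (psi := fun x z => epsilon hYne (fun y => dXY (inl x) (inr y) + dYZ (inl y) (inr z) < L)).
  assert (Hpsi : forall x z, E z x -> dXY (inl x) (inr (psi x z)) + dYZ (inl (psi x z)) (inr z) < L).
  { intros x z Hx. unfold psi. apply epsilon_spec. exact Hx. }
  set (Tj := fun j : nat => PB (fun y => nth_error (G y) j) (fun _ => C1)).
  set (phi := fun (k j : nat) (z : Z) => match nth_error (F z) k with
     | Some x => if excluded_middle_informative (nth_error (G (psi x z)) j = Some x) then Some (psi x z) else None
     | None => None end).
  set (wk := fun (k : nat) (z : Z) => match nth_error (F z) k with Some x => coef S x z | None => C0 end).
  set (Rkj := fun k j => PB (phi k j) (wk k)).
  destruct (coef_bound S HS) as [KS [HKS HKS']].
  assert (HTj : forall j, Mrho dXY (Tj j)).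
  { intros j. assert (HB : BoundedOp (Tj j)).
    { apply (PB_BO _ _ 1 NR); [lra| intros; rewrite Cnorm2_C1; lra|].
      intros x l Hl Hin. apply (HNR x); auto. intros y Hy. apply (HG y).
      apply (nth_error_In _ j). auto. }
    apply in_closure_self; auto. split; auto. exists L. intros x y Hxy.
    unfold coef, Tj, PB. destruct (nth_error (G y) j) as [x'|] eqn:Ex; auto.
    assert (dXY (inl x') (inr y) < L) by (apply (HG y); apply (nth_error_In _ j); auto).
    unfold delta. destruct excluded_middle_informative; [subst; lra|]. apply Cmul_0r. }
  assert (Hphi : forall k j z y, phi k j z = Some y -> dYZ (inl y) (inr z) < L).
  { intros k j z y. unfold phi. destruct (nth_error (F z) k) as [x|] eqn:Ex; [|discriminate].
    destruct excluded_middle_informative; [|discriminate]. intros Hy; injection Hy; intros <-.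
    assert (E z x) by (apply (HF z); apply (nth_error_In _ k); auto).
    pose proof (Hpsi x z H). pose proof (Hnn1 (inl x) (inr (psi x z))). lra. }
  assert (HRkj : forall k j, Mrho dYZ (Rkj k j)).
  { intros k j. assert (HB : BoundedOp (Rkj k j)).
    { apply (PB_BO _ _ KS NZ); auto.
      - intros z. unfold wk. destruct (nth_error (F z) k); auto. rewrite Cnorm2_C0; auto.
      - intros y l Hl Hin. apply (HNZ y); auto. intros z Hz. apply (Hphi k j); auto. }
    apply in_closure_self; auto. split; auto. exists L. intros y z Hyz.
    unfold coef, Rkj, PB. destruct (phi k j z) as [y'|] eqn:Ey; auto.
    pose proof (Hphi k j z y' Ey).
    unfold delta. destruct excluded_middle_informative; [subst; lra|]. apply Cmul_0r. }
  exists (flat_map (fun k => map (fun j => (C1, Tj j, Rkj k j)) (seq 0 N2)) (seq 0 N1)).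
  split.
  - intros c T S' Hin. apply in_flat_map in Hin. destruct Hin as [k [_ Hin]].
    apply in_map_iff in Hin. destruct Hin as [j [Ej _]]. injection Ej; intros <- <- _. auto.
  - intros f Hf z.
    change (S f z = csum (flat_map (fun k => map (fun j => (C1, Tj j, Rkj k j)) (seq 0 N2)) (seq 0 N1))
       (fun p => Cmul (fst (fst p)) ((snd p) ((snd (fst p)) f) z))).
    rewrite csum_flat_map.
    rewrite (csum_ext _ _ (fun k => match nth_error (F z) k with Some x => Cmul (f x) (coef S x z) | None => C0 end)).
    + rewrite csum_seq_nth; auto. apply MR; auto. apply HF.
      intros x Hx. apply (HF z). unfold comp in HSL.
      destruct (Rlt_or_le (comp_metric dX dZ dXY dYZ (inl x) (inr z)) L) as [Hlt|Hge].
      * apply (comp_lt dX dY dZ dXY dYZ hXY hYZ hYne x z L Hlt).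
      * exfalso. apply Hx. apply HSL. lra.
    + intros k _. rewrite csum_map. simpl.
      destruct (nth_error (F z) k) as [x|] eqn:Ex.
      * assert (Hx : E z x) by (apply (HF z); apply (nth_error_In _ k); auto).
        rewrite (csum_ext _ _ (fun j => if excluded_middle_informative (nth_error (G (psi x z)) j = Some x)
                 then Cmul (f x) (coef S x z) else C0)).
        -- apply csum_nth_single; auto. apply HG. apply HG. pose proof (Hpsi x z Hx).
           pose proof (Hnn2 (inl (psi x z)) (inr z)). lra.
        -- intros j _. rewrite Cmul_1l. unfold Rkj, PB, phi, wk. rewrite Ex.
           destruct excluded_middle_informative as [e|e].
           ++ unfold Tj, PB. rewrite e, Cmul_1l, Cmul_comm. reflexivity.
           ++ reflexivity.
      * apply csum_zero. intros j _. rewrite Cmul_1l. unfold Rkj, PB, phi. rewrite Ex. reflexivity.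
Qed.

Lemma dir2 U : Mrho comp U -> HatTensor (Mrho dXY) (Mrho dYZ) U.
Proof.
  intros [HU Ha]. split; auto. intros eps Heps.
  destruct (Ha eps Heps) as [S [[HSb HSf] HSa]].
  exists S. split; auto. destruct (KD S HSb HSf) as [l [Hl HlS]]. exists l. split; auto.
Qed.
End Dir2.

Theorem mainTheorem7 (X Y Z : Type)
  (dX : X -> X -> R) (dY : Y -> Y -> R) (dZ : Z -> Z -> R)
  (hX : CountableDiscreteBG dX) (hY : CountableDiscreteBG dY) (hZ : CountableDiscreteBG dZ)
  (hYne : inhabited Y)
  (dXY : (X + Y) -> (X + Y) -> R) (dYZ : (Y + Z) -> (Y + Z) -> R)
  (hXY : InD dX dY dXY) (hYZ : InD dY dZ dYZ) :
  forall U : Op X Z,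
    HatTensor (Mrho dXY) (Mrho dYZ) U <-> Mrho (comp_metric dX dZ dXY dYZ) U.
Proof.
  intros U. destruct hX as [_ [_ [_ bX]]]. destruct hY as [_ [_ [_ bY]]]. destruct hZ as [_ [_ [_ bZ]]].
  split.
  - intros H. eapply dir1; eauto.
  - intros H. eapply dir2; eauto.
Qed.
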